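(* For every $n\in\mathbb{N}$ and every admissible $\Theta$: if $p$ is a projector over $A(\mathbb{R}^{2n}_\Theta)$, then all entries of $p$ are scalar multiples of the identity (i.e. $p$ is a projector over $\mathbb{C}$), and hence $K_0(A(\mathbb{R}^{2n}_\Theta))=K_0(\mathbb{C})\cong\mathbb{Z}$.
   Context: Let $\Theta=(\theta_{pq})_{1\leq p,q\leq 2n}$ be a real skew-symmetric matrix with $\theta_{2m-1,2m}=-\theta_{2m,2m-1}>0$ for $m=1,\dots,n$ and all other entries $0$. $A(\mathbb{R}^{2n}_\Theta)$ is the unital $*$-algebra generated by self-adjoint $x_1,\dots,x_{2n}$ with $[x_p,x_q]=-i\theta_{pq}$; every element is a finite sum $\sum a_{p_1,\dots,p_{2n}}x_1^{p_1}\cdots x_{2n}^{p_{2n}}$ with linearly independent ordered monomials. A projector over a $*$-algebra $A$ is a square matrix $p$ over $A$ with $p^2=p=p^*$; projectors $p,q$ are equivalent if $\mathrm{diag}(p,0)=u\,\mathrm{diag}(q,0)\,u^*$ for some unitary matrix $u$ over $A$; $K_0(A)$ is the Grothendieck group of equivalence classes under $p+q:=\mathrm{diag}(p,q)$. *)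

(* Defs.v *)
From HB Require Import structures.
From mathcomp Require Import all_boot all_algebra complex.
From mathcomp Require Import reals Rstruct.
Set Implicit Arguments. Unset Strict Implicit. Unset Printing Implicit Defensive.
Import GRing.Theory Num.Theory.
Local Open Scope ring_scope.
Local Open Scope complex_scope.

Definition RR := Rdefinitions.R.
Definition C := RR[i].

(* Paper (1-indexed): theta_{2m-1,2m} = - theta_{2m,2m-1} > 0, all other
   entries 0.  0-indexed: the pairs are (2m, 2m+1). *)
Definition admissible (n : nat) (th : 'M[RR]_(2 * n)) : Prop :=
  forall p q : 'I_(2 * n),
    ((~~ odd p) && (val q == (val p).+1) -> 0 < th p q /\ th q p = - th p q) /\
    ((val p)./2 != (val q)./2 -> th p q = 0) /\
    (p = q -> th p q = 0).

Section StarAlg.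
Variable A : algType C.

Definition is_involution (star : A -> A) : Prop :=
  [/\ forall a b, star (a + b) = star a + star b,
      forall a b, star (a * b) = star b * star a,
      forall a, star (star a) = a &
      forall (c : C) a, star (c *: a) = c^* *: star a].

Definition monomial (m : nat) (x : 'I_m -> A) (e : {ffun 'I_m -> nat}) : A :=
  \prod_(p < m) x p ^+ e p.

Definition ordered_monomial_basis (m : nat) (x : 'I_m -> A) : Prop :=
  (forall a : A, exists s : seq ({ffun 'I_m -> nat} * C),
       a = \sum_(ec <- s) ec.2 *: monomial x ec.1) /\
  (forall (s : seq {ffun 'I_m -> nat}) (c : {ffun 'I_m -> nat} -> C),
       uniq s -> \sum_(e <- s) c e *: monomial x e = 0 ->
       forall e, e \in s -> c e = 0).

(* A is (a presentation of) A(R^{2n}_Theta): self-adjoint generators with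
   [x_p, x_q] = -i theta_pq, and ordered monomials form a basis *)
Definition is_Moyal_algebra (n : nat) (th : 'M[RR]_(2 * n))
    (star : A -> A) (x : 'I_(2 * n) -> A) : Prop :=
  [/\ is_involution star,
      forall p, star (x p) = x p,
      forall p q, x p * x q - x q * x p = (- 'i * (th p q)%:C) *: 1 &
      ordered_monomial_basis x].

Variable star : A -> A.

Definition mx_star k (M : 'M[A]_k) : 'M[A]_k := (map_mx star M)^T.

Definition is_projector k (P : 'M[A]_k) : Prop :=
  P *m P = P /\ mx_star P = P.

Definition is_unitary k (U : 'M[A]_k) : Prop :=
  U *m mx_star U = 1%:M /\ mx_star U *m U = 1%:M.

(* diag(P, 0) of size N (for k <= N) *)
Definition pad k N (P : 'M[A]_k) : 'M[A]_N :=
  \matrix_(i < N, j < N)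
    match insub (val i) : option 'I_k, insub (val j) : option 'I_k with
    | Some i', Some j' => P i' j'
    | _, _ => 0
    end.

Definition proj_equiv k l (P : 'M[A]_k) (Q : 'M[A]_l) : Prop :=
  exists N (U : 'M[A]_N),
    [/\ (k <= N)%N, (l <= N)%N, is_unitary U & pad N P = U *m pad N Q *m mx_star U].

Definition dsum k l (P : 'M[A]_k) (Q : 'M[A]_l) : 'M[A]_(k + l) :=
  block_mx P 0 0 Q.

(* Grothendieck relation on formal differences [P] - [Q]:
   (P,Q) ~ (P',Q') iff P + Q' + R ~ P' + Q + R for some projector R *)
Definition K0_rel k l k' l' (P : 'M[A]_k) (Q : 'M[A]_l)
    (P' : 'M[A]_k') (Q' : 'M[A]_l') : Prop :=
  exists r (Rm : 'M[A]_r), is_projector Rm /\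
    proj_equiv (dsum (dsum P Q') Rm) (dsum (dsum P' Q) Rm).

(* K_0(A) (Grothendieck group of projector classes under diagonal sum,
   elements = classes of formal differences [P]-[Q]) is isomorphic to Z:
   there is f on projectors, additive for diag sums, such that
   [P]-[Q] |-> f P - f Q is well defined, injective and surjective onto int
   (it is then a group isomorphism K_0(A) -> Z). *)
Definition K0_iso_int : Prop :=
  exists f : forall k, 'M[A]_k -> int,
    [/\ (forall k l (P : 'M[A]_k) (Q : 'M[A]_l),
            is_projector P -> is_projector Q -> f _ (dsum P Q) = f _ P + f _ Q),
        (forall k l k' l' (P : 'M[A]_k) (Q : 'M[A]_l)
                (P' : 'M[A]_k') (Q' : 'M[A]_l'),
            is_projector P -> is_projector Q ->
            is_projector P' -> is_projector Q' ->
            (K0_rel P Q P' Q' <-> f _ P - f _ Q = f _ P' - f _ Q')) &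
        (forall z : int, exists k l (P : 'M[A]_k) (Q : 'M[A]_l),
            [/\ is_projector P, is_projector Q & f _ P - f _ Q = z])].

End StarAlg.

(* Main.v *)
Require Import Defs.
From HB Require Import structures.
From mathcomp Require Import all_boot all_algebra complex.
From mathcomp Require Import reals Rstruct.
From mathcomp Require Import zify spectral sesquilinear.
From Stdlib Require Import ClassicalEpsilon.
Set Implicit Arguments. Unset Strict Implicit. Unset Printing Implicit Defensive.
Import GRing.Theory Num.Theory.
Local Open Scope ring_scope.

Section Span.
Variable A : algType C.
Variable T : Type.
Variable g : T -> A.
Variable P : pred T.

Definition spn (a : A) : Prop :=
  exists s : seq (T * C), all P (map fst s) /\ a = \sum_(tc <- s) tc.2 *: g tc.1.

Lemma spn0 : spn 0.
Proof. by exists [::]; rewrite big_nil. Qed.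

Lemma spnD a b : spn a -> spn b -> spn (a + b).
Proof.
move=> [s [Hs ->]] [t [Ht ->]]; exists (s ++ t); split.
  by rewrite map_cat all_cat Hs Ht.
by rewrite big_cat.
Qed.

Lemma spnZ c a : spn a -> spn (c *: a).
Proof.
move=> [s [Hs ->]]; exists [seq (tc.1, c * tc.2) | tc <- s]; split.
  by rewrite -map_comp.
by rewrite big_map scaler_sumr; apply: eq_bigr => tc _ /=; rewrite scalerA.
Qed.

Lemma spnN a : spn a -> spn (- a).
Proof. by move=> H; rewrite -scaleN1r; apply: spnZ. Qed.

Lemma spnB a b : spn a -> spn b -> spn (a - b).
Proof. by move=> Ha Hb; apply: spnD => //; apply: spnN. Qed.

Lemma spn_gen t : P t -> spn (g t).
Proof.
by move=> Ht; exists [:: (t, 1)]; rewrite /= Ht big_seq1 scale1r.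
Qed.

Lemma spn_sum (I : Type) (r : seq I) (F : I -> A) :
  (forall i, spn (F i)) -> spn (\sum_(i <- r) F i).
Proof.
move=> H; elim: r => [|i r IH]; first by rewrite big_nil; exact: spn0.
by rewrite big_cons; apply: spnD.
Qed.

End Span.

Lemma spn_mono (A : algType C) T (g : T -> A) (P Q : pred T) a :
  (forall t, P t -> Q t) -> spn g P a -> spn g Q a.
Proof.
move=> PQ [s [Hs ->]]; exists s; split => //.
elim: s Hs => //= t s IH /andP [h1 h2]; by rewrite PQ // IH.
Qed.



Lemma spn_trans (A : algType C) T T' (g : T -> A) (g' : T' -> A) (P : pred T) (Q : pred T') a :
  (forall t, P t -> spn g' Q (g t)) -> spn g P a -> spn g' Q a.
Proof.
move=> H [s [Hs ->]]; elim: s Hs => [|tc s IH] /=; first by move=> _; rewrite big_nil; exact: spn0.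
by case/andP=> H1 H2; rewrite big_cons; apply: spnD; [apply: spnZ; apply: H|apply: IH].
Qed.

Lemma regroup (A : algType C) (K : eqType) (F : K -> A) (t : seq (K * C)) (S : seq K) :
  uniq S -> {subset map fst t <= S} ->
  \sum_(ec <- t) ec.2 *: F ec.1 = \sum_(e <- S) (\sum_(ec <- t | ec.1 == e) ec.2) *: F e.
Proof.
move=> uS; elim: t => [|ec t IH] sub.
  by rewrite big_nil big1 // => e _; rewrite big_nil scale0r.
rewrite big_cons IH; last by move=> e He; apply: sub; rewrite inE He orbT.
have eS : ec.1 \in S by apply: sub; rewrite inE eqxx.
rewrite [RHS](eq_bigr (fun e => (if ec.1 == e then ec.2 *: F e else 0) + 
   (\sum_(ec0 <- t | ec0.1 == e) ec0.2) *: F e)); last first.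
  move=> e _; rewrite big_cons; case: eqP => [<-|_]; last by rewrite add0r.
  by rewrite scalerDl.
rewrite big_split /=; congr (_ + _).
rewrite (bigD1_seq ec.1) //= eqxx big1_seq ?addr0 // => e /andP [ne _].
by rewrite eq_sym (negbTE ne).
Qed.


Section Coef.
Variable A : algType C.
Variable m : nat.
Variable x : 'I_m -> A.
Hypothesis Hb : ordered_monomial_basis x.

Local Notation mon := (monomial x).
Local Notation E := {ffun 'I_m -> nat}.

Definition rep (a : A) (s : seq (E * C)) := a = \sum_(ec <- s) ec.2 *: mon ec.1.

Definition coef (a : A) (e : E) : C :=
  \sum_(ec <- epsilon (inhabits [::]) (rep a) | ec.1 == e) ec.2.

Lemma zero_rep t : \sum_(ec <- t) ec.2 *: mon ec.1 = 0 ->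
  forall e, \sum_(ec <- t | ec.1 == e) ec.2 = 0.
Proof.
move=> H0 e.
have uS : uniq (undup (map fst t)) by apply: undup_uniq.
have sub : {subset map fst t <= undup (map fst t)} by move=> f; rewrite mem_undup.
rewrite (regroup mon uS sub) in H0.
have := Hb.2 _ (fun e => \sum_(ec <- t | ec.1 == e) ec.2) uS H0.
case: (boolP (e \in undup (map fst t))) => [He -> //|He _].
rewrite big_seq_cond big1 // => ec /andP [ht /eqP he]; exfalso.
move/negP: He; apply; rewrite mem_undup -he; exact: map_f.
Qed.

Lemma coefE a t : rep a t -> forall e, coef a e = \sum_(ec <- t | ec.1 == e) ec.2.
Proof.
move=> Ht e; rewrite /coef.
have ex : exists s, rep a s by exists t.
have := epsilon_spec (inhabits [::]) (rep a) ex.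
set s0 := epsilon _ _ => Hs0.
have Z : \sum_(ec <- s0 ++ [seq (ec.1, - ec.2) | ec <- t]) ec.2 *: mon ec.1 = 0.
  rewrite big_cat big_map /= -Hs0.
  under eq_bigr do rewrite scaleNr.
  by rewrite sumrN -Ht subrr.
have := zero_rep Z e; rewrite big_cat big_map /= sumrN => /eqP.
by rewrite subr_eq0 => /eqP.
Qed.

Lemma rep_exists a : exists t, rep a t.
Proof. by have [t Ht] := Hb.1 a; exists t. Qed.

Lemma coefD a b e : coef (a + b) e = coef a e + coef b e.
Proof.
have [s Hs] := rep_exists a; have [t Ht] := rep_exists b.
have Hst : rep (a + b) (s ++ t) by rewrite /rep big_cat -Hs -Ht.
by rewrite (coefE Hst) (coefE Hs) (coefE Ht) big_cat.
Qed.

Lemma coefZ c a e : coef (c *: a) e = c * coef a e.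
Proof.
have [s Hs] := rep_exists a.
have Hst : rep (c *: a) [seq (ec.1, c * ec.2) | ec <- s].
  rewrite /rep big_map Hs scaler_sumr; apply: eq_bigr => ec _ /=; by rewrite scalerA.
rewrite (coefE Hst) (coefE Hs) big_map mulr_sumr.
by apply: eq_bigr.
Qed.

Lemma coef0 e : coef 0 e = 0.
Proof. by rewrite -(scale0r 0) coefZ mul0r. Qed.

Lemma coefN a e : coef (- a) e = - coef a e.
Proof. by rewrite -scaleN1r coefZ mulN1r. Qed.

Lemma coefB a b e : coef (a - b) e = coef a e - coef b e.
Proof. by rewrite coefD coefN. Qed.

Lemma coef_sum (I : Type) (r : seq I) (F : I -> A) e :
  coef (\sum_(i <- r) F i) e = \sum_(i <- r) coef (F i) e.
Proof.
elim: r => [|i r IH]; first by rewrite !big_nil coef0.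
by rewrite !big_cons coefD IH.
Qed.

Lemma coef_mon f e : coef (mon f) e = (f == e)%:R.
Proof.
have H : rep (mon f) [:: (f, 1)] by rewrite /rep big_seq1 scale1r.
rewrite (coefE H) big_cons big_nil /=.
by case: eqP => _; rewrite ?addr0.
Qed.

Lemma decomp a t S : rep a t -> uniq S -> {subset map fst t <= S} ->
  a = \sum_(e <- S) coef a e *: mon e.
Proof.
move=> Ht uS sub; rewrite {1}Ht (regroup mon uS sub).
by apply: eq_bigr => e _; rewrite (coefE Ht).
Qed.

End Coef.


Section PBW.
Variable A : algType C.
Variable m : nat.
Variable x : 'I_m -> A.
Variable gam : 'I_m -> 'I_m -> C.
Hypothesis comm : forall p q, x p * x q - x q * x p = gam p q *: 1.

Local Notation mon := (monomial x).
Local Notation E := {ffun 'I_m -> nat}.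

Definition prodw (w : seq 'I_m) : A := \prod_(i <- w) x i.
Definition cnt (w : seq 'I_m) : E := [ffun p => count_mem p w].
Definition deg (e : E) : nat := (\sum_(p < m) e p)%N.
Definition Ls d := spn mon (fun e => (deg e <= d)%N).
Definition Ws k := spn prodw (fun v => size v == k).
Definition addd (e : E) (a : 'I_m) : E := [ffun p => (e p + (p == a))%N].
Definition word (e : E) : seq 'I_m := flatten [seq nseq (e p) p | p <- index_enum 'I_m].

Lemma prodw_cat u v : prodw (u ++ v) = prodw u * prodw v.
Proof. by rewrite /prodw big_cat. Qed.

Lemma prodw_cons a u : prodw (a :: u) = x a * prodw u.
Proof. by rewrite /prodw big_cons. Qed.

Lemma prodw_nil : prodw [::] = 1.
Proof. by rewrite /prodw big_nil. Qed.

Lemma prodw_nseq k p : prodw (nseq k p) = x p ^+ k.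
Proof. by elim: k => [|k IH]; rewrite ?prodw_nil ?expr0 //= prodw_cons IH exprS. Qed.

Lemma mon_word e : mon e = prodw (word e).
Proof.
rewrite /prodw /word big_flatten big_map /monomial.
by apply: eq_bigr => p _; rewrite -prodw_nseq.
Qed.

Lemma cnt_word e : cnt (word e) = e.
Proof.
apply/ffunP => p; rewrite ffunE /word count_flatten -map_comp sumnE big_map.
rewrite (eq_bigr (fun q => (q == p) * e q)%N); last by move=> q _; rewrite /= count_nseq.
rewrite -/(\sum_(q < m) ((q == p) * e q))%N (bigD1 p) //= eqxx mul1n big1 ?addn0 //.
by move=> q /negbTE ->.
Qed.

Lemma deg_cnt w : deg (cnt w) = size w.
Proof.
rewrite /deg; elim: w => [|b w IH].
  by rewrite big1 // => p _; rewrite ffunE.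
rewrite (eq_bigr (fun p => (b == p) + cnt w p)%N); last by move=> p _; rewrite !ffunE.
rewrite big_split /= IH (bigD1 b) //= eqxx big1 // => p /negbTE.
by rewrite eq_sym => ->.
Qed.

Lemma size_word e : size (word e) = deg e.
Proof. by rewrite -deg_cnt cnt_word. Qed.

Lemma cnt_cat u v : cnt (u ++ v) = [ffun p => (cnt u p + cnt v p)%N].
Proof. by apply/ffunP => p; rewrite !ffunE count_cat. Qed.

Lemma cnt_cons a u : cnt (a :: u) = addd (cnt u) a.
Proof. by apply/ffunP => p; rewrite !ffunE /= addnC eq_sym. Qed.

Lemma mon0 (e : E) : (forall p, e p = 0%N) -> mon e = 1.
Proof. by move=> H; rewrite /monomial big1 // => p _; rewrite H expr0. Qed.

Lemma monL (a : 'I_m) (e : E) : (forall p : 'I_m, (p < a)%N -> e p = 0%N) ->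
  x a * mon e = mon (addd e a).
Proof.
move=> H.
pose G (f : E) (i : nat) := if insub i is Some p then x p ^+ f p else 1.
have GE f : mon f = \prod_(0 <= i < m) G f i.
  by rewrite big_mkord /monomial; apply: eq_bigr => p _; rewrite /G valK.
have am : (a <= m)%N by apply: ltnW.
have split f : \prod_(0 <= i < m) G f i =
    \prod_(0 <= i < a) G f i * (G f a * \prod_(a.+1 <= i < m) G f i).
  by rewrite (@big_cat_nat _ _ _ a 0 m _ _ (leq0n a) am) /= (big_ltn (ltn_ord a)).
have one (f : E) : (forall p : 'I_m, (p < a)%N -> f p = 0%N) -> \prod_(0 <= i < a) G f i = 1.
  move=> Hf; rewrite big_nat big1 // => i /andP [_ ia].
  rewrite /G insubT ?(ltn_trans ia) // => Hi /=; rewrite Hf ?expr0 //.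
have Ga f : G f a = x a ^+ f a by rewrite /G valK.
rewrite !GE !split !one //; last first.
  move=> p pa; rewrite ffunE H //.
  suff -> : (p == a) = false by [].
  by apply/negbTE; apply/eqP => E'; move: pa; rewrite E' ltnn.
rewrite !mul1r !Ga ffunE eqxx addn1 exprS mulrA; congr (_ * _).
apply: eq_big_nat => i /andP [ai _]; rewrite /G.
case: insubP => // p _ vp; rewrite ffunE.
suff -> : (p == a) = false by rewrite addn0.
by apply/negbTE; apply/eqP => pa; move: ai; rewrite -vp pa ltnn.
Qed.

Lemma monL0 (a : 'I_m) : x a = mon (cnt [:: a]).
Proof.
rewrite cnt_cons -monL; last by move=> p _; rewrite ffunE.
by rewrite mon0 ?mulr1 // => p; rewrite ffunE.
Qed.


Lemma spn_mull T T' (g : T -> A) (g' : T' -> A) (P : pred T) (Q : pred T') (y c : A) :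
  (forall t, P t -> spn g' Q (y * g t)) -> spn g P c -> spn g' Q (y * c).
Proof.
move=> H [s [Hs ->]]; rewrite mulr_sumr.
elim: s Hs => [|tc s IH] /=; first by move=> _; rewrite big_nil; exact: spn0.
case/andP=> H1 H2; rewrite big_cons; apply: spnD; last exact: IH.
by rewrite -scalerAr; apply: spnZ; apply: H.
Qed.

Lemma spn_mulr T T' (g : T -> A) (g' : T' -> A) (P : pred T) (Q : pred T') (y c : A) :
  (forall t, P t -> spn g' Q (g t * y)) -> spn g P c -> spn g' Q (c * y).
Proof.
move=> H [s [Hs ->]]; rewrite mulr_suml.
elim: s Hs => [|tc s IH] /=; first by move=> _; rewrite big_nil; exact: spn0.
case/andP=> H1 H2; rewrite big_cons; apply: spnD; last exact: IH.
by rewrite -scalerAl; apply: spnZ; apply: H.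
Qed.

Lemma Ls_mono d d' c : (d <= d')%N -> Ls d c -> Ls d' c.
Proof. by move=> dd; apply: spn_mono => e /leq_trans; apply. Qed.

Lemma commW a u : Ws (size u).-1 (x a * prodw u - prodw u * x a).
Proof.
elim: u => [|b u IH].
  by rewrite prodw_nil mulr1 mul1r subrr; exact: spn0.
rewrite prodw_cons.
have -> : x a * (x b * prodw u) - x b * prodw u * x a =
    (x a * x b - x b * x a) * prodw u + x b * (x a * prodw u - prodw u * x a).
  by rewrite mulrBl mulrBr !mulrA addrA subrK.
rewrite comm -scalerAl mul1r; apply: spnD.
  by apply: spnZ; apply: spn_gen => /=.
case: u IH => [|c u] IH.
  by rewrite prodw_nil mulr1 mul1r subrr mulr0; exact: spn0.
apply: (spn_mull _ IH) => v /eqP Hv; rewrite -prodw_cons; apply: spn_gen.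
by rewrite /= Hv.
Qed.

Lemma min_split (w : seq 'I_m) : w != [::] ->
  exists u1 a u2, w = u1 ++ a :: u2 /\ forall q, q \in w -> (a <= q)%N.
Proof.
elim: w => // b w IH _.
case: w IH => [|c w] IH.
  exists [::], b, [::]; split => // q; rewrite inE => /eqP ->; exact: leqnn.
have [u1 [a [u2 [Ew Ha]]]] := IH isT.
case: (leqP b a) => ba.
  exists [::], b, (c :: w); split => // q; rewrite inE => /orP [/eqP -> //|].
  by move/Ha; apply: leq_trans.
exists (b :: u1), a, u2; split; first by rewrite Ew.
move=> q; rewrite inE => /orP [/eqP ->|/Ha //]; exact: ltnW.
Qed.

Lemma claim n w : (size w <= n)%N -> Ls (size w).-1 (prodw w - mon (cnt w)).
Proof.
elim: n w => [|n IH] w.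
  rewrite leqn0 => /nilP ->; rewrite prodw_nil mon0 ?subrr; first exact: spn0.
  by move=> p; rewrite ffunE.
case: (leqP (size w) n) => [/IH //|hw hw'].
have sw : size w = n.+1 by apply/eqP; rewrite eqn_leq hw'.
have hL v : (size v <= n)%N -> Ls (size v) (prodw v).
  move=> hv; rewrite -(subrK (mon (cnt v)) (prodw v)); apply: spnD.
    by apply: Ls_mono (IH v hv); apply: leq_pred.
  by apply: spn_gen; rewrite deg_cnt.
have hW k c : (k <= n)%N -> Ws k c -> Ls k c.
  move=> kn; apply: spn_trans => v /eqP Hv; rewrite -Hv; apply: hL; by rewrite Hv.
rewrite sw /=.
case: n IH sw hw hw' hL hW => [|n] IH sw hw hw' hL hW.
  case: w sw {hw hw'} => [|a [|? ?]] // _.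
  by rewrite -monL0 prodw_cons prodw_nil mulr1 subrr; exact: spn0.
have wn : w != [::] by case: w sw {hw hw'}.
have [u1 [a [u2 [Ew Ha]]]] := min_split wn.
pose v := u1 ++ u2.
have sv : size v = n.+1 by move: sw; rewrite Ew /v !size_cat /= addnS => -[].
pose K := x a * prodw u1 - prodw u1 * x a.
have Emon : mon (cnt w) = x a * mon (cnt v).
  rewrite monL.
    congr mon; apply/ffunP => p; rewrite Ew /v !ffunE !count_cat /=.
    by rewrite addnA addnAC eq_sym.
  move=> p pa; rewrite ffunE; apply/count_memPn; apply/negP => pv.
  have : (a <= p)%N by apply: Ha; rewrite Ew mem_cat inE; move: pv; rewrite mem_cat => /orP [->|->]; rewrite ?orbT.
  by rewrite leqNgt pa.
have Ew' : prodw w - mon (cnt w) = x a * (prodw v - mon (cnt v)) - K * prodw u2.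
  rewrite Emon Ew prodw_cat prodw_cons /v prodw_cat mulrA.
  have -> : prodw u1 * x a = x a * prodw u1 - K by rewrite /K opprB addrC subrK.
  by rewrite mulrBl mulrBr !mulrA addrAC.
rewrite Ew'; apply: spnB.
  apply: (spn_mull _ (IH v _)); last by rewrite sv.
  move=> e; rewrite sv /= => He.
  rewrite mon_word -prodw_cons; apply: Ls_mono (hL _ _); rewrite /= size_word //.
have su : (size u1 + size u2 = n.+1)%N by move: sw; rewrite Ew size_cat /= addnS => -[].
apply: Ls_mono (hW ((size u1).-1 + size u2)%N _ _ _).
  by rewrite -su leq_add2r leq_pred.
  by rewrite -su leq_add2r leq_pred.
apply: (spn_mulr _ (commW a u1)) => v' /eqP Hv'.
by rewrite -prodw_cat; apply: spn_gen; rewrite size_cat Hv'.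
Qed.

End PBW.


Lemma seq_argmax (T : eqType) (s : seq T) (f : T -> nat) : s != [::] ->
  exists2 y, y \in s & forall z, z \in s -> (f z <= f y)%N.
Proof.
elim: s => // a s IH _; case: s IH => [|b s] IH.
  by exists a; rewrite ?inE // => z; rewrite inE => /eqP ->.
have [y ys Hy] := IH isT.
case: (leqP (f a) (f y)) => ay.
  exists y; first by rewrite inE ys orbT.
  by move=> z; rewrite inE => /orP [/eqP ->|/Hy].
exists a; first by rewrite inE eqxx.
move=> z; rewrite inE => /orP [/eqP ->//|/Hy/leq_trans]; apply; exact: ltnW.
Qed.

Lemma spn_sum_seq (A : algType C) T (g : T -> A) (P : pred T) (I : eqType) (r : seq I) (F : I -> A) :
  (forall i, i \in r -> spn g P (F i)) -> spn g P (\sum_(i <- r) F i).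
Proof.
elim: r => [|i r IH] H; first by rewrite big_nil; exact: spn0.
rewrite big_cons; apply: spnD; first by apply: H; rewrite inE eqxx.
by apply: IH => j jr; apply: H; rewrite inE jr orbT.
Qed.

Lemma sq_le a b : ((a + b) ^ 2 <= 2 * (a ^ 2 + b ^ 2))%N.
Proof.
case: (leqP a b) => h.
  have [k ->] : exists k, b = (a + k)%N by exists (b - a)%N; lia.
  nia.
have [k ->] : exists k, a = (b + k)%N by exists (a - b)%N; lia.
nia.
Qed.
Lemma sq_lt a b : a <> b -> ((a + b) ^ 2 < 2 * (a ^ 2 + b ^ 2))%N.
Proof.
move=> ne; case: (leqP a b) => h.
  have [k ->] : exists k, b = (a + k.+1)%N by exists (b - a).-1; lia.
  nia.
have [k ->] : exists k, a = (b + k.+1)%N by exists (a - b).-1; lia.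
nia.
Qed.

Section Key.
Variable A : algType C.
Variable m : nat.
Variable x : 'I_m -> A.
Variable gam : 'I_m -> 'I_m -> C.
Hypothesis comm : forall p q, x p * x q - x q * x p = gam p q *: 1.
Variable star : A -> A.
Hypothesis Hinv : is_involution star.
Hypothesis Hsa : forall p, star (x p) = x p.
Hypothesis Hb : ordered_monomial_basis x.

Local Notation mon := (monomial x).
Local Notation E := {ffun 'I_m -> nat}.
Local Notation Ls := (Ls x).
Local Notation coef := (coef x).
Local Notation prodw := (prodw x).

Lemma starD a b : star (a + b) = star a + star b.
Proof. by case: Hinv. Qed.
Lemma starM a b : star (a * b) = star b * star a.
Proof. by case: Hinv. Qed.
Lemma starK a : star (star a) = a.
Proof. by case: Hinv. Qed.
Lemma starZ (c : C) a : star (c *: a) = conjc c *: star a.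
Proof. by case: Hinv. Qed.
Lemma star0 : star 0 = 0.
Proof. by apply: (addrI (star 0)); rewrite -starD !addr0. Qed.
Lemma star1 : star 1 = 1.
Proof.
have H := starM (star 1) 1; rewrite mulr1 starK mulr1 in H; by rewrite -H.
Qed.
Lemma star_sum (I : Type) (r : seq I) (F : I -> A) :
  star (\sum_(i <- r) F i) = \sum_(i <- r) star (F i).
Proof.
elim: r => [|i r IH]; first by rewrite !big_nil star0.
by rewrite !big_cons starD IH.
Qed.

Lemma star_prodw w : star (prodw w) = prodw (rev w).
Proof.
elim: w => [|b w IH]; first by rewrite prodw_nil star1.
by rewrite prodw_cons starM IH Hsa rev_cons -cats1 prodw_cat prodw_cons prodw_nil mulr1.
Qed.

Definition adde (e f : E) : E := [ffun p => (e p + f p)%N].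

Lemma deg_adde e f : deg (adde e f) = (deg e + deg f)%N.
Proof. by rewrite /deg -big_split; apply: eq_bigr => p _; rewrite ffunE. Qed.

Lemma monstar e f : mon e * star (mon f) = prodw (word e ++ rev (word f)).
Proof. by rewrite !mon_word star_prodw prodw_cat. Qed.

Lemma cnt_ms e f : cnt (word e ++ rev (word f)) = adde e f.
Proof.
apply/ffunP => p; rewrite !ffunE count_cat count_rev.
by rewrite -!(ffunE (fun p => count_mem p _)) -/(cnt _) -/(cnt (word f)) !cnt_word.
Qed.

Lemma MP1 e f : Ls (deg e + deg f).-1 (mon e * star (mon f) - mon (adde e f)).
Proof.
have := @claim A m x gam comm _ (word e ++ rev (word f)) (leqnn _).
by rewrite cnt_ms size_cat size_rev !size_word -monstar.
Qed.

Lemma MP2 e f : Ls (deg e + deg f) (mon e * star (mon f)).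
Proof.
rewrite -(subrK (mon (adde e f)) (mon e * star (mon f))); apply: spnD.
  by apply: Ls_mono (MP1 e f); apply: leq_pred.
by apply: spn_gen; rewrite deg_adde.
Qed.

Lemma coef_Ls d c g : Ls d c -> (d < deg g)%N -> coef c g = 0.
Proof.
move=> [s [Hs Hc]] dg; rewrite (coefE Hb Hc) big1_seq // => ec /andP [/eqP eg ecs].
have := allP Hs _ (map_f fst ecs); rewrite /= eg => H.
by move: (leq_ltn_trans H dg); rewrite ltnn.
Qed.

Definition psi (e : E) : nat := (\sum_(p < m) (e p) ^ 2)%N.

Lemma psi_lemma e f es : adde e f = adde es es ->
  (psi e <= psi es)%N -> (psi f <= psi es)%N -> e = es.
Proof.
move=> Hs He Hf.
have Hp p : (e p + f p = es p + es p)%N.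
  by move: (congr1 (fun g : E => g p) Hs); rewrite !ffunE.
suff ef : forall p, e p = f p.
  apply/ffunP => p; have := Hp p; rewrite ef; move: (f p) (es p) => a b; lia.
move=> p0; apply/eqP; apply/negPn/negP => ne.
have lt1 : ((e p0 + f p0) ^ 2 < 2 * (e p0 ^ 2 + f p0 ^ 2))%N by apply: sq_lt; apply/eqP.
have le1 p : ((e p + f p) ^ 2 <= 2 * (e p ^ 2 + f p ^ 2))%N by apply: sq_le.
have S1 : (\sum_(p < m) (e p + f p) ^ 2 = 4 * psi es)%N.
  rewrite /psi big_distrr; apply: eq_bigr => p _; rewrite Hp; move: (es p) => a /=; nia.
have S2 : (\sum_(p < m) 2 * (e p ^ 2 + f p ^ 2) = 2 * psi e + 2 * psi f)%N.
  by rewrite /psi !big_distrr -big_split; apply: eq_bigr => p _; move: (e p) (f p) => a b /=; nia.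
have : (\sum_(p < m) (e p + f p) ^ 2 < \sum_(p < m) 2 * (e p ^ 2 + f p ^ 2))%N.
  rewrite (bigD1 p0) //= [X in (_ < X)%N](bigD1 p0) //=.
  have H : (\sum_(p < m | p != p0) (e p + f p) ^ 2 <= \sum_(p < m | p != p0) 2 * (e p ^ 2 + f p ^ 2))%N.
    by apply: leq_sum => p _; apply: le1.
  move: lt1 H; move: (\sum_(p < m | p != p0) _)%N (\sum_(p < m | p != p0) (2 * _))%N => u v.
  move: ((e p0 + f p0) ^ 2)%N (2 * (e p0 ^ 2 + f p0 ^ 2))%N => a b; lia.
lia.
Qed.


Lemma sum_if1 (I : eqType) (r : seq I) (i : I) (F : I -> C) :
  uniq r -> i \in r -> \sum_(j <- r) (if j == i then F j else 0) = F i.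
Proof.
move=> ur ir; rewrite (bigD1_seq i) //= eqxx big1 ?addr0 // => j /negbTE -> //.
Qed.

Lemma key k (a : 'I_k -> A) d : (0 < d)%N -> (forall j, Ls d (a j)) ->
  Ls (d + d).-1 (\sum_j a j * star (a j)) -> forall j, Ls d.-1 (a j).
Proof.
move=> d0 Ha Hsum.
have [s Hs] : exists s : 'I_k -> seq (E * C),
    forall j, all (fun e => deg e <= d)%N (map fst (s j)) /\ rep x (a j) (s j).
  apply: (@fin_all_exists _ (fun _ => seq (E * C))
    (fun j t => all (fun e => deg e <= d)%N (map fst t) /\ rep x (a j) t)) => j.
  have [t [Ht1 Ht2]] := Ha j; by exists t.
pose S := undup (flatten [seq map fst (s j) | j <- enum 'I_k]).
have uS : uniq S := undup_uniq _.
have subS j : {subset map fst (s j) <= S}.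
  move=> e He; rewrite mem_undup; apply/flattenP; exists (map fst (s j)) => //.
  by apply: map_f; rewrite mem_enum.
have degS e : e \in S -> (deg e <= d)%N.
  by rewrite mem_undup => /flattenP [r /mapP [j _ ->] He]; exact: (allP (Hs j).1 _ He).
have dec j : a j = \sum_(e <- S) coef (a j) e *: mon e := decomp Hb (Hs j).2 uS (subS j).
case: (boolP [forall j, all (fun e => (deg e == d) ==> (coef (a j) e == 0)) S]) => [/forallP Hall | Hn].
  move=> j; rewrite (dec j); apply: spn_sum_seq => e eS.
  have := allP (Hall j) e eS; case: eqP => [_ /eqP -> | ne _]; first by rewrite scale0r; exact: spn0.
  apply: spnZ; apply: spn_gen; have := degS e eS; move: ne; move: (deg e) => u; lia.
exfalso.
pose T := [seq e <- S | (deg e == d) && [exists j, coef (a j) e != 0]].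
have Tne : T != [::].
  move: Hn; rewrite negb_forall => /existsP [j] /allPn [e eS].
  rewrite negb_imply => /andP [/eqP de ce].
  apply/eqP => T0; have : e \in T.
    by rewrite mem_filter de eqxx /= eS andbT; apply/existsP; exists j.
  by rewrite T0.
have [es esT Hmax] := seq_argmax psi Tne.
have inT e : e \in S -> deg e = d -> forall j, coef (a j) e != 0 -> e \in T.
  move=> eS de j cj; rewrite mem_filter de eqxx eS andbT /=; apply/existsP; by exists j.
move: esT; rewrite mem_filter => /andP [/andP [/eqP des /existsP [j0 cj0]] esS].
pose gs := adde es es.
have dgs : deg gs = (d + d)%N by rewrite deg_adde des.
have C0 : coef (\sum_j a j * star (a j)) gs = 0.
  by apply: coef_Ls Hsum _; rewrite dgs; lia.
have termc e f : e \in S -> f \in S -> coef (mon e * star (mon f)) gs =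
    if (deg e == d) && (deg f == d) then (adde e f == gs)%:R else 0.
  move=> eS fS; have de := degS e eS; have df := degS f fS.
  case: ifP => [/andP [/eqP de' /eqP df'] | hd].
    rewrite -(subrK (mon (adde e f)) (mon e * star (mon f))) (coefD Hb) (coef_mon Hb).
    rewrite (coef_Ls (MP1 e f)) ?add0r // de' df' dgs; lia.
  apply: coef_Ls (MP2 e f) _; rewrite dgs.
  move: hd; case: eqP => ?; case: eqP => ? //= _; lia.
have term j e f : e \in S -> f \in S ->
    coef (a j) e * conjc (coef (a j) f) * coef (mon e * star (mon f)) gs =
    if (e == es) && (f == es) then coef (a j) es * conjc (coef (a j) es) else 0.
  move=> eS fS; rewrite termc //.
  case: ifP => [/andP [/eqP de /eqP df] | hd]; last first.
    rewrite mulr0; case: ifP => // /andP [/eqP E1 /eqP E2]; move: hd.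
    by rewrite E1 E2 des eqxx.
  have cz : conjc (0 : C) = 0 by exact: (@conjC0 C).
  case: (eqVneq (coef (a j) e) 0) => [c0 | ce].
    rewrite c0 !mul0r; case: ifP => // /andP [/eqP E1 _]; by rewrite -E1 c0 mul0r.
  case: (eqVneq (coef (a j) f) 0) => [c0 | cf].
    rewrite c0 cz mulr0 mul0r; case: ifP => // /andP [_ /eqP E2]; by rewrite -E2 c0 cz mulr0.
  have eT := inT e eS de j ce; have fT := inT f fS df j cf.
  case: eqP => [ef | ef]; last by rewrite mulr0; case: ifP => // /andP [/eqP E1 /eqP E2]; by case: ef; rewrite E1 E2.
  have E1 : e = es.
    by apply: (psi_lemma ef); apply: Hmax.
  have E2 : f = es.
    apply: (@psi_lemma f e); [|by apply: Hmax|by apply: Hmax].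
    by apply: etrans ef; apply/ffunP => p; rewrite !ffunE addnC.
  by rewrite E1 E2 eqxx mulr1.
have Cval : coef (\sum_j a j * star (a j)) gs = \sum_j coef (a j) es * conjc (coef (a j) es).
  rewrite (coef_sum Hb); apply: eq_bigr => j _.
  rewrite {1 2}(dec j) star_sum mulr_suml (coef_sum Hb).
  rewrite [LHS](eq_big_seq (fun e => if e == es then coef (a j) es * conjc (coef (a j) es) else 0)).
    by rewrite sum_if1 // eqxx.
  move=> e eS /=; rewrite mulr_sumr (coef_sum Hb).
  rewrite (eq_big_seq (fun f => if (e == es) && (f == es) then coef (a j) es * conjc (coef (a j) es) else 0)).
    case: (eqVneq e es) => [_|_] /=; first by rewrite (sum_if1 (fun _ => _)).
    by rewrite big1.
  move=> f fS /=; rewrite starZ -scalerAl -scalerAr scalerA !(coefZ Hb).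
  exact: term.
move: C0; rewrite Cval => /psumr_eq0P H.
have := H (fun j _ => mul_conjC_ge0 _) j0 isT.
by move/eqP; rewrite mul_conjC_eq0 (negbTE cj0).
Qed.

End Key.


Section Scal.
Variable A : algType C.
Variable m : nat.
Variable x : 'I_m -> A.
Variable gam : 'I_m -> 'I_m -> C.
Hypothesis comm : forall p q, x p * x q - x q * x p = gam p q *: 1.
Variable star : A -> A.
Hypothesis Hinv : is_involution star.
Hypothesis Hsa : forall p, star (x p) = x p.
Hypothesis Hb : ordered_monomial_basis x.

Local Notation mon := (monomial x).
Local Notation E := {ffun 'I_m -> nat}.
Local Notation Ls := (Ls x).
Local Notation coef := (coef x).

Definition e0 : E := [ffun => 0%N].

Lemma mon_e0 : mon e0 = 1.
Proof. by apply: mon0 => p; rewrite ffunE. Qed.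

Lemma Ls0_scalar a : Ls 0 a -> a = (coef a e0)%:A.
Proof.
move=> [s [Hs Ha]].
have He : forall e, e \in map fst s -> e = e0.
  move=> e /(allP Hs) /= d0; apply/ffunP => p; rewrite ffunE.
  move: d0; rewrite leqn0 /deg sum_nat_eq0 => /forallP /(_ p) /implyP /(_ isT) /eqP.
  by [].
have Ha' := Ha.
rewrite (coefE Hb Ha) Ha -mon_e0 scaler_suml.
rewrite big_seq [RHS]big_seq_cond; apply: eq_big => [ec | ec ecs].
  by case: (boolP (ec \in s)) => // ecs; rewrite (He ec.1 (map_f _ ecs)) eqxx.
by rewrite (He ec.1 (map_f _ ecs)).
Qed.

Lemma Ls_exists a : exists d, Ls d a.
Proof.
have [t Ht] := Hb.1 a.
suff [d Hd] : exists d, all (fun e => deg e <= d)%N (map fst t) by exists d, t.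
elim: t {Ht} => [|ec t [d Hd]]; first by exists 0%N.
exists (maxn (deg ec.1) d) => /=; rewrite leq_maxl /=.
by apply: sub_all Hd => e /= /leq_trans; apply; rewrite leq_maxr.
Qed.

Lemma row_bound k (F : 'I_k -> A) : exists d, forall j, Ls d (F j).
Proof.
have [ds Hds] : exists ds : 'I_k -> nat, forall j, Ls (ds j) (F j).
  apply: (@fin_all_exists _ (fun _ => nat) (fun j d => Ls d (F j))) => j.
  exact: Ls_exists.
exists (\max_j ds j) => j; apply: Ls_mono (Hds j); exact: leq_bigmax.
Qed.

Lemma rows_scalar k (V : 'M[A]_k) :
  (forall i d, (forall j, Ls d (V i j)) -> Ls d (\sum_j V i j * star (V i j))) ->
  forall i j, Ls 0 (V i j).
Proof.
move=> HV i.
suff H : forall d, (forall j, Ls d (V i j)) -> forall j, Ls 0 (V i j).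
  by have [d Hd] := row_bound (fun j => V i j); apply: H Hd.
elim => [//|d IH] Hd; apply: IH.
apply: (key comm Hinv Hsa Hb (ltn0Sn d) Hd).
apply: Ls_mono (HV i _ Hd); lia.
Qed.

Lemma projector_scalar k (P : 'M[A]_k) : is_projector star P ->
  forall i j, Ls 0 (P i j).
Proof.
move=> [PP PS]; apply: rows_scalar => i d Hd.
have Pii : P i i = \sum_j P i j * star (P i j).
  rewrite -{1}PP -{2}PS !mxE; apply: eq_bigr => j _; by rewrite !mxE.
by rewrite -Pii.
Qed.

End Scal.

Module UEq.
Import Num.Def.
Local Open Scope sesquilinear_scope.

Section UE.
Variable F : numClosedFieldType.

Definition herm_idem n (G : 'M[F]_n) := G *m G = G /\ G ^t* = G.

Lemma adjM m n p (X : 'M[F]_(m, n)) (Y : 'M[F]_(n, p)) : (X *m Y) ^t* = Y ^t* *m X ^t*.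
Proof. by rewrite trmx_mul map_mxM. Qed.

Lemma herm_eq n (E G : 'M[F]_n) : herm_idem E -> herm_idem G ->
  (E <= G)%MS -> (G <= E)%MS -> E = G.
Proof.
move=> [EE Eh] [GG Gh] /submxP [X EX] /submxP [Y GY].
have EG : E *m G = E by rewrite EX -mulmxA GG.
have GE : G *m E = G by rewrite GY -mulmxA EE.
by rewrite -Eh -EG adjM Eh Gh GE.
Qed.

Lemma diag_form N (G : 'M[F]_N) : herm_idem G ->
  exists q (S : 'M[F]_(\rank G + q, N)),
    [/\ S *m S ^t* = 1%:M, (\rank G + q = N)%N &
        G = S ^t* *m block_mx 1%:M 0 0 0 *m S].
Proof.
move=> HG; exists _, (schmidt_complete G); split.
- exact/unitarymxP/schmidt_complete_unitarymx.
- exact: add_rank_ortho.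
rewrite /schmidt_complete tr_col_mx map_row_mx mul_row_block !mulmx0 mulmx1 !addr0.
rewrite mul_row_col mul0mx addr0.
set B := schmidt (row_base G).
have BB : B *m B ^t* = 1%:M by apply/unitarymxP/schmidt_unitarymx/rank_leq_col.
have BG : (B :=: G)%MS.
  exact: eqmx_trans (eqmx_schmidt_free (row_base_free G)) (eq_row_base G).
symmetry; apply: herm_eq => //.
- split; first by rewrite mulmxA -[B ^t* *m B *m B ^t*]mulmxA BB mulmx1.
  by rewrite adjM trmxCK.
- by apply: (submx_trans (submxMl _ _)); rewrite BG.
have e : B *m (B ^t* *m B) = B by rewrite mulmxA BB mul1mx.
by rewrite -BG -{1}e submxMl.
Qed.

Lemma unit_equiv N (G1 G2 : 'M[F]_N) : herm_idem G1 -> herm_idem G2 ->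
  \rank G1 = \rank G2 ->
  exists W : 'M[F]_N, [/\ W *m W ^t* = 1%:M, W ^t* *m W = 1%:M &
    G1 = W *m G2 *m W ^t*].
Proof.
move=> H1 H2 r12.
have [q1 [S1 [U1 R1 D1]]] := diag_form H1.
have [q2 [S2 [U2 R2 D2]]] := diag_form H2.
move: S1 S2 U1 U2 R1 R2 D1 D2; rewrite -r12; move: (\rank G1) => r.
move=> S1 S2 U1 U2 R1 R2 D1 D2.
have q12 : q1 = q2 by apply/eqP; rewrite -(eqn_add2l r) R1 R2.
subst q2.
have V1 : S1 ^t* *m S1 = 1%:M by rewrite -[S1 ^t*]mul1mx mulmxKtV //; apply/unitarymxP.
have V2 : S2 ^t* *m S2 = 1%:M by rewrite -[S2 ^t*]mul1mx mulmxKtV //; apply/unitarymxP.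
exists (S1 ^t* *m S2); split.
- by rewrite adjM trmxCK mulmxA -[_ *m S2 *m _]mulmxA U2 mulmx1 V1.
- by rewrite adjM trmxCK mulmxA -[_ *m S1 *m _]mulmxA U1 mulmx1 V2.
rewrite D1 D2 adjM trmxCK !mulmxA.
rewrite -[S1 ^t* *m S2 *m S2 ^t*]mulmxA U2 mulmx1.
by rewrite -[_ *m S2 *m S2 ^t*]mulmxA U2 mulmx1 -!mulmxA.
Qed.

End UE.

End UEq.
Import UEq.
Local Open Scope sesquilinear_scope.

Definition emb N k : 'M[C]_(N, k) := \matrix_(i, j) ((val i == val j)%:R).

Lemma embE N k p (M : 'M[C]_(k, p)) i b :
  (emb N k *m M) i b = if insub (val i) is Some i' then M i' b else 0.
Proof.
rewrite mxE; case: insubP => [i' _ vi | ni].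
  rewrite (bigD1 i') //= mxE vi eqxx mul1r big1 ?addr0 // => a ne.
  rewrite mxE; case: eqP => [e|]; last by rewrite mul0r.
  by case/negP: ne; apply/eqP/val_inj; rewrite vi e.
rewrite big1 // => a _; rewrite mxE; case: eqP => [e|]; last by rewrite mul0r.
by case/negP: ni; rewrite e ltn_ord.
Qed.

Lemma emb_tr N k : (emb N k) ^t* = (emb N k)^T.
Proof. by apply/matrixP => i j; rewrite !mxE conjC_nat. Qed.

Lemma emb_conj N k : map_mx Num.conj (emb N k) = emb N k.
Proof. by apply/matrixP => i j; rewrite !mxE conjC_nat. Qed.

Lemma embTemb N k : (k <= N)%N -> (emb N k)^T *m emb N k = 1%:M.
Proof.
move=> kN; apply/matrixP => i j; rewrite !mxE.
rewrite (bigD1 (widen_ord kN i)) //= !mxE /= eqxx mul1r big1 ?addr0.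
  by rewrite eqn_leq -!val_eqE /= -eqn_leq.
move=> a ne; rewrite !mxE; case: eqP => [e|]; last by rewrite mul0r.
by case/negP: ne; apply/eqP/val_inj; rewrite /= e.
Qed.

Definition embP N k (E : 'M[C]_k) : 'M[C]_N := emb N k *m E *m (emb N k)^T.

Lemma embP_herm N k (E : 'M[C]_k) : (k <= N)%N -> herm_idem E -> herm_idem (embP N E).
Proof.
move=> kN [EE EH]; split.
  by rewrite /embP !mulmxA -[emb N k *m E *m _ *m _]mulmxA embTemb // mulmx1 -[_ *m E *m E]mulmxA EE.
by rewrite /embP !adjM emb_tr EH trmxK emb_conj mulmxA.
Qed.

Lemma embP_rank N k (E : 'M[C]_k) : (k <= N)%N -> \rank (embP N E) = \rank E.
Proof.
move=> kN; apply/eqP; rewrite eqn_leq; apply/andP; split.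
  by rewrite /embP (leq_trans (mxrankM_maxl _ _)) // mxrankM_maxr.
have HE : E = (emb N k)^T *m embP N E *m emb N k.
  by rewrite /embP !mulmxA embTemb // mul1mx -mulmxA embTemb // mulmx1.
by rewrite {1}HE (leq_trans (mxrankM_maxl _ _)) // mxrankM_maxr.
Qed.

Lemma herm_block k1 k2 (E1 : 'M[C]_k1) (E2 : 'M[C]_k2) :
  herm_idem E1 -> herm_idem E2 -> herm_idem (block_mx E1 0 0 E2).
Proof.
move=> [E11 E1h] [E22 E2h]; split.
  by rewrite mulmx_block !mulmx0 !mul0mx !addr0 !add0r E11 E22.
by rewrite tr_block_mx map_block_mx E1h E2h !trmx0 !map_mx0.
Qed.

Section K0.
Variable A : algType C.
Variable m : nat.
Variable x : 'I_m -> A.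
Variable gam : 'I_m -> 'I_m -> C.
Hypothesis comm : forall p q, x p * x q - x q * x p = gam p q *: 1.
Variable star : A -> A.
Hypothesis Hinv : is_involution star.
Hypothesis Hsa : forall p, star (x p) = x p.
Hypothesis Hb : ordered_monomial_basis x.

Local Notation mon := (monomial x).
Local Notation Ls := (Ls x).
Local Notation coef := (coef x).

Definition sc (a : A) : C := coef a (e0 m).
Definition lift n1 n2 (M : 'M[C]_(n1, n2)) : 'M[A]_(n1, n2) := map_mx (in_alg A) M.
Local Notation mxs := (mx_star star).

Lemma sc_alg c : sc (c%:A) = c.
Proof. by rewrite /sc (coefZ Hb) -(mon_e0 x) (coef_mon Hb) eqxx mulr1. Qed.

Lemma sc0 : sc 0 = 0.
Proof. by rewrite /sc (coef0 Hb). Qed.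

Lemma lift_sc n1 n2 (M : 'M[C]_(n1, n2)) : map_mx sc (lift M) = M.
Proof. by apply/matrixP => i j; rewrite !mxE sc_alg. Qed.

Lemma lift_inj n1 n2 (M N : 'M[C]_(n1, n2)) : lift M = lift N -> M = N.
Proof. by move=> H; rewrite -(lift_sc M) H lift_sc. Qed.

Lemma liftM n1 n2 n3 (M : 'M[C]_(n1, n2)) (N : 'M[C]_(n2, n3)) :
  lift (M *m N) = lift M *m lift N.
Proof. exact: map_mxM. Qed.

Lemma lift1 n : lift (1%:M : 'M[C]_n) = 1%:M.
Proof. exact: map_mx1. Qed.

Lemma lift0 n1 n2 : lift (0 : 'M[C]_(n1, n2)) = 0.
Proof. by apply/matrixP => i j; rewrite !mxE rmorph0. Qed.

Lemma star_alg c : star (c%:A) = (conjc c)%:A.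
Proof. by rewrite (starZ Hinv) (star1 Hinv). Qed.

Lemma mxs_lift n (M : 'M[C]_n) : mxs (lift M) = lift (M ^t*).
Proof. by apply/matrixP => i j; rewrite !mxE star_alg. Qed.

Lemma mxsM n (M N : 'M[A]_n) : mxs (M *m N) = mxs N *m mxs M.
Proof.
apply/matrixP => i j; rewrite !mxE (star_sum Hinv); apply: eq_bigr => l _.
by rewrite !mxE (starM Hinv).
Qed.

Lemma mxs1 n : mxs (1%:M : 'M[A]_n) = 1%:M.
Proof. by rewrite -lift1 mxs_lift trmx1 map_mx1. Qed.

Lemma scalar_lift n1 n2 (V : 'M[A]_(n1, n2)) : (forall i j, Ls 0 (V i j)) ->
  V = lift (map_mx sc V).
Proof.
move=> H; apply/matrixP => i j; rewrite !mxE.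
by rewrite {1}(Ls0_scalar Hb (H i j)).
Qed.

Lemma proj_lift n (P : 'M[A]_n) : is_projector star P ->
  P = lift (map_mx sc P) /\ herm_idem (map_mx sc P).
Proof.
move=> HP; have PE := scalar_lift (projector_scalar comm Hinv Hsa Hb HP).
case: HP => PP PS; split => //; split; apply: lift_inj.
  by rewrite liftM -PE PP.
by rewrite -mxs_lift -PE PS.
Qed.

Lemma lift_proj n (E : 'M[C]_n) : herm_idem E -> is_projector star (lift E).
Proof. by move=> [EE EH]; split; rewrite ?mxs_lift -?liftM ?EE ?EH. Qed.


Lemma pad_lift N k (E : 'M[C]_k) : pad N (lift E) = lift (embP N E).
Proof.
apply/matrixP => i j; rewrite /pad mxE [RHS]mxE /embP -mulmxA embE.
have -> : E *m (emb N k)^T = (emb N k *m E^T)^T by rewrite trmx_mul trmxK.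
case: (insub (val i)) => [i'|]; last by rewrite rmorph0.
rewrite mxE embE; case: (insub (val j)) => [j'|]; last by rewrite rmorph0.
by rewrite !mxE.
Qed.

Lemma Ls0_alg c : Ls 0 (c%:A).
Proof.
rewrite -(mon_e0 x); apply: spnZ; apply: spn_gen.
by rewrite /deg big1 // => p _; rewrite ffunE.
Qed.

Lemma PE_forward k1 k2 (E1 : 'M[C]_k1) (E2 : 'M[C]_k2) :
  herm_idem E1 -> herm_idem E2 -> proj_equiv star (lift E1) (lift E2) ->
  \rank E1 = \rank E2.
Proof.
move=> H1 H2 [N [U [k1N k2N [UU1 UU2] HP]]].
rewrite !pad_lift in HP.
have [G11 G1h] := embP_herm k1N H1; have [G22 G2h] := embP_herm k2N H2.
rewrite -(embP_rank E1 k1N) -(embP_rank E2 k2N).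
move: HP G11 G1h G22 G2h; move: (embP N E1) (embP N E2) => G1 G2 HP G11 G1h G22 G2h.
pose V := U *m lift G2.
have F22 : lift G2 *m lift G2 = lift G2 by rewrite -liftM G22.
have F2s : mxs (lift G2) = lift G2 by rewrite mxs_lift G2h.
have VV : V *m mxs V = lift G1.
  by rewrite /V mxsM F2s HP !mulmxA -(mulmxA U) F22.
have VsV : mxs V *m V = lift G2.
  by rewrite /V mxsM F2s -!mulmxA (mulmxA (mxs U)) UU2 mul1mx F22.
have VF : V *m lift G2 = V by rewrite /V -mulmxA F22.
have FV : lift G1 *m V = V.
  by rewrite HP /V -!mulmxA (mulmxA (mxs U)) UU2 mul1mx F22.
have VL : V = lift (map_mx sc V).
  apply: scalar_lift; apply: (rows_scalar comm Hinv Hsa Hb) => i d _.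
  have -> : \sum_j V i j * star (V i j) = (V *m mxs V) i i.
    by rewrite mxE; apply: eq_bigr => j _; rewrite !mxE.
  by rewrite VV mxE; apply: Ls_mono (Ls0_alg _).
move: VV VsV VF FV; rewrite VL !mxs_lift -!liftM; move: (map_mx sc V) => W.
move=> /lift_inj WW /lift_inj WsW /lift_inj WG /lift_inj GW.
have r1 : \rank G1 = \rank W.
  apply/eqP; rewrite eqn_leq -{1}WW mxrankM_maxl /=.
  by rewrite -{1}GW mxrankM_maxl.
have r2 : \rank G2 = \rank W.
  apply/eqP; rewrite eqn_leq -{1}WsW mxrankM_maxr /=.
  by rewrite -{1}WG mxrankM_maxr.
by rewrite r1 r2.
Qed.

Lemma PE_backward k1 k2 (E1 : 'M[C]_k1) (E2 : 'M[C]_k2) :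
  herm_idem E1 -> herm_idem E2 -> \rank E1 = \rank E2 ->
  proj_equiv star (lift E1) (lift E2).
Proof.
move=> H1 H2 r12.
have k1N : (k1 <= k1 + k2)%N by apply: leq_addr.
have k2N : (k2 <= k1 + k2)%N by apply: leq_addl.
have [W [WW WsW G]] := unit_equiv (embP_herm k1N H1) (embP_herm k2N H2)
  (etrans (embP_rank E1 k1N) (etrans r12 (esym (embP_rank E2 k2N)))).
exists (k1 + k2)%N, (lift W); split => //.
  by split; rewrite mxs_lift -liftM ?WW ?WsW lift1.
by rewrite !pad_lift G !liftM mxs_lift.
Qed.

Lemma dsum_lift k1 k2 (X : 'M[C]_k1) (Y : 'M[C]_k2) :
  dsum (lift X) (lift Y) = lift (block_mx X 0 0 Y).
Proof. by rewrite /dsum /lift map_block_mx -!/(lift _) !lift0. Qed.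

Lemma map_sc_dsum k1 k2 (P : 'M[A]_k1) (Q : 'M[A]_k2) :
  map_mx sc (dsum P Q) = block_mx (map_mx sc P) 0 0 (map_mx sc Q).
Proof.
rewrite /dsum map_block_mx.
have H0 : forall p q, map_mx sc (0 : 'M[A]_(p, q)) = 0.
  by move=> p q; apply/matrixP => i j; rewrite !mxE sc0.
by rewrite !H0.
Qed.

Lemma herm0 n : herm_idem (0 : 'M[C]_n).
Proof. by split; rewrite ?mulmx0 // trmx0 map_mx0. Qed.

Lemma herm1 n : herm_idem (1%:M : 'M[C]_n).
Proof. by split; rewrite ?mulmx1 // trmx1 map_mx1. Qed.

Lemma K0_main : K0_iso_int star.
Proof.
exists (fun k (P : 'M[A]_k) => (\rank (map_mx sc P))%:Z); split.
- by move=> k l P Q _ _; rewrite map_sc_dsum rank_diag_block_mx.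
- move=> k l k' l' P Q P' Q' HP HQ HP' HQ' /=.
  have [EP hP] := proj_lift HP; have [EQ hQ] := proj_lift HQ.
  have [EP' hP'] := proj_lift HP'; have [EQ' hQ'] := proj_lift HQ'.
  move: EP hP EQ hQ EP' hP' EQ' hQ'.
  move: (map_mx sc P) (map_mx sc Q) (map_mx sc P') (map_mx sc Q') => Pc Qc P'c Q'c.
  move=> -> hP -> hQ -> hP' -> hQ'.
  split.
    move=> [r [R [HR Hpe]]].
    have [ER hR] := proj_lift HR.
    move: Hpe; rewrite ER !dsum_lift => /PE_forward.
    move=> /(_ (herm_block (herm_block hP hQ') hR) (herm_block (herm_block hP' hQ) hR)).
    rewrite !rank_diag_block_mx; lia.
  move=> Heq; exists 0%N, 0; split.
    by split; apply/matrixP => -[].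
  rewrite -lift0 !dsum_lift; apply: PE_backward.
  + exact: herm_block (herm_block hP hQ') (herm0 _).
  + exact: herm_block (herm_block hP' hQ) (herm0 _).
  rewrite !rank_diag_block_mx; lia.
move=> [] n.
  exists n, 0%N, 1%:M, 1%:M; rewrite -!lift1 !lift_sc !mxrank1 subr0.
  by split => //; apply: lift_proj; exact: herm1.
exists 0%N, n.+1, 1%:M, 1%:M; rewrite -!lift1 !lift_sc !mxrank1 sub0r NegzE.
by split => //; apply: lift_proj; exact: herm1.
Qed.

End K0.

Local Open Scope complex_scope.

Theorem corollary2p5 (n : nat) (th : 'M[RR]_(2 * n)) (A : algType C)
    (star : A -> A) (x : 'I_(2 * n) -> A) :
  admissible th -> is_Moyal_algebra th star x ->
  (forall k (P : 'M[A]_k), is_projector star P ->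
     forall i j, exists c : C, P i j = c%:A) /\
  K0_iso_int star.
Proof.
move=> _ [Hinv Hsa Hcomm Hb]; split.
  move=> k P HP i j; exists (coef x (P i j) (e0 _)); apply: (Ls0_scalar Hb).
  exact: (projector_scalar Hcomm Hinv Hsa Hb HP).
exact: (K0_main Hcomm Hinv Hsa Hb).
Qed.
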